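(* Consider Algorithm MWHVC (described in the context) run on a hypergraph $G=(V,E)$ of rank $f$ with vertex weights $w$, with parameters $\varepsilon\in(0,1]$, $\beta=\varepsilon/(f+\varepsilon)$ and multiplier $\alpha>1$. For every iteration $i\ge 0$ and every vertex $v\notin C$ (at iteration $i$), we have $\sum_{e\in E'(v)} \mathrm{deal}_i(e)\le \beta\cdot w(v)$, where $E'(v)$ is the set of hyperedges containing $v$ that are still uncovered in iteration $i$.
   Context: Let $G=(V,E)$ be a hypergraph: each hyperedge is a nonempty subset of $V$ of size at most $f$ (rank $f$). Vertices have nonnegative weights $w(v)$. For $v\in V$, $E(v)=\{e\in E: v\in e\}$; $\Delta=\max_v |E(v)|\ge 3$. A hyperedge $e$ is covered by $C\subseteq V$ if $e\cap C\neq\emptyset$. The computation is distributed in synchronous rounds on the bipartite network with node set $V\cup E$ and a link between $v$ and $e$ iff $v\in e$. Parameters: $\varepsilon\in(0,1]$, $\beta=\varepsilon/(f+\varepsilon)$, and a multiplier $\alpha>1$. Algorithm MWHVC: Initialize $C\gets\emptyset$ and $E'(v)\gets E(v)$ for every $v$. Iteration $0$: every hyperedge $e$ sets $\mathrm{deal}_0(e)=\beta\cdot\min_{v\in e} w(v)/|E(v)|$ and $\delta_0(e)=\mathrm{deal}_0(e)$. For $i=1,2,\dots$: (a) every vertex $v\notin C$ (not terminated) checks whether $\sum_{e\in E(v)}\delta_{i-1}(e)\ge(1-\beta)w(v)$; if so, $v$ joins $C$, tells every $e\in E'(v)$ that $e$ is covered, and terminates. (b) Every uncovered hyperedge that receives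 such a message becomes covered, informs all its vertices, and terminates. (c) Every vertex $v\notin C$ that is told $e$ is covered sets $E'(v)\gets E'(v)\setminus\{e\}$; if $E'(v)=\emptyset$, $v$ terminates without joining $C$. (d) Every vertex $v\notin C$ sends ''raise'' to all $e\in E'(v)$ if $\sum_{e\in E'(v)}\mathrm{deal}_{i-1}(e)\le(\beta/\alpha)w(v)$, and otherwise sends ''stuck'' to all $e\in E'(v)$. (e) Every uncovered hyperedge $e$ sets $\mathrm{deal}_i(e)=\mathrm{deal}_{i-1}(e)$ if it received some ''stuck'' message, and $\mathrm{deal}_i(e)=\alpha\cdot\mathrm{deal}_{i-1}(e)$ otherwise, and $\delta_i(e)=\delta_{i-1}(e)+\mathrm{deal}_i(e)$. If $e$ becomes covered in iteration $j$, then by convention $\delta_i(e)=\delta_{j-1}(e)$ for all $i\ge j$. *)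

(* Defs.v *)
From HB Require Import structures.
From mathcomp Require Import all_boot all_order all_algebra.
Set Implicit Arguments. Unset Strict Implicit. Unset Printing Implicit Defensive.
Import Order.TTheory GRing.Theory Num.Theory.
Local Open Scope ring_scope.

Record mwhvc_state (V E : finType) (R : realFieldType) := MkState {
  inC   : V -> bool;
  term  : V -> bool;          (* v has terminated (joined C or E'(v) = empty) *)
  cov   : E -> bool;
  Ep    : V -> {set E};
  deal  : E -> R;
  delta : E -> R
}.

Section MWHVC.
Variables (V E : finType) (R : realFieldType).
Variable inc : V -> E -> bool.   (* inc v e  <->  v \in e *)
Variable w : V -> R.
Variables (beta alpha : R).

Definition Eof (v : V) : {set E} := [set e | inc v e].
Definition deg (v : V) : nat := #|Eof v|.

(* minimum of a (nonempty) sequence; 0 on the empty sequence *)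
Definition seqmin (s : seq R) : R :=
  match s with [::] => 0 | x :: s' => foldr Num.min x s' end.

Definition deal0 (e : E) : R :=
  beta * seqmin [seq w v / (deg v)%:R | v <- enum V & inc v e].

Definition init_state : mwhvc_state V E R :=
  MkState (fun _ => false) (fun _ => false) (fun _ => false)
          Eof deal0 deal0.

(* One iteration i >= 1, steps (a)-(e). *)
Definition step (s : mwhvc_state V E R) : mwhvc_state V E R :=
  (* (a) vertices joining C *)
  let J v := ~~ term s v && ((1 - beta) * w v <= \sum_(e | inc v e) delta s e) in
  let C' v := inC s v || J v in
  let newcov e := ~~ cov s e && [exists v, J v && (e \in Ep s v)] in
  let cov' e := cov s e || newcov e in
  let told v := ~~ term s v && ~~ C' v && [exists e, newcov e && (e \in Ep s v)] in
  let Ep' v := if C' v then Ep s v else [set e in Ep s v | ~~ newcov e] in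
  let term' v := [|| term s v, J v | told v && (Ep' v == set0)] in
  (* (d) non-terminated vertices send "stuck" unless their sum is small *)
  let stuck v := ~~ term' v &&
                 ~~ (\sum_(e in Ep' v) deal s e <= beta / alpha * w v) in
  let deal' e := if cov' e then deal s e
                 else if [exists v, stuck v && (e \in Ep' v)] then deal s e
                 else alpha * deal s e in
  let delta' e := if cov' e then delta s e else delta s e + deal' e in
  MkState C' term' cov' Ep' deal' delta'.

(* state at the end of iteration i (iteration 0 = initialization) *)
Definition state_at (i : nat) : mwhvc_state V E R := iter i step init_state.

End MWHVC.

(* Main.v *)
Require Import Defs.
From HB Require Import structures.
From mathcomp Require Import all_boot all_order all_algebra.
From mathcomp Require Import ring.
Import Order.TTheory GRing.Theory Num.Theory.
Local Open Scope ring_scope.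

Lemma sum_sub (R : realFieldType) (E : finType) (A B : {set E}) (F : E -> R) :
  A \subset B -> (forall e, e \in B -> 0 <= F e) ->
  \sum_(e in A) F e <= \sum_(e in B) F e.
Proof.
move=> /subsetP sAB H; rewrite [X in X <= _]big_mkcond [X in _ <= X]big_mkcond /=.
apply: ler_sum => e _; case: ifP => eA; first by rewrite (sAB _ eA).
case: ifP => // eB; exact: H.
Qed.

Lemma seqmin_ge0 (R : realFieldType) (s : seq R) :
  all (fun x => 0 <= x) s -> 0 <= seqmin s.
Proof.
case: s => [|x s] //= /andP[Hx]; elim: s => [|y s IH] //= /andP[Hy Hs].
by rewrite le_min Hy IH.
Qed.

Lemma seqmin_le (R : realFieldType) (s : seq R) x :
  x \in s -> seqmin s <= x.
Proof.
case: s => [|y s] //=; rewrite inE => /orP[/eqP ->|].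
  by elim: s => [|z s IH] //=; rewrite ge_min IH orbT.
elim: s => [|z s IH] //=; rewrite inE => /orP[/eqP ->|H].
  by rewrite ge_min lexx.
by rewrite ge_min IH ?orbT.
Qed.

Lemma step_inv (R : realFieldType) (V E : finType)
  (inc : V -> E -> bool) (w : V -> R) (beta alpha : R) (s : mwhvc_state V E R)
  (Hb : 0 <= beta) (Ha : 1 < alpha) (Hw : forall v, 0 <= w v)
  (Hd : forall e, 0 <= deal s e)
  (Ht : forall v, term s v -> ~~ inC s v -> Ep s v = set0)
  (Hs : forall v, ~~ inC s v -> \sum_(e in Ep s v) deal s e <= beta * w v) :
  let s' := step inc w beta alpha s in
  [/\ (forall e, 0 <= deal s' e),
      (forall v, term s' v -> ~~ inC s' v -> Ep s' v = set0) &
      (forall v, ~~ inC s' v -> \sum_(e in Ep s' v) deal s' e <= beta * w v)].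
Proof.
have Ha0 : 0 < alpha by apply: lt_trans Ha.
rewrite /step /=.
split.
- move=> e; case: ifP => _; first exact: Hd.
  case: ifP => _; first exact: Hd.
  by rewrite mulr_ge0 // ltW.
- move=> v Ht'; rewrite negb_or => /andP[HinC HJ].
  rewrite (negbTE HinC) (negbTE HJ) /= in Ht' *.
  case/orP: Ht' => [Hterm | /andP[_ /eqP ->] //].
  by apply/setP => e; rewrite !inE (Ht _ Hterm HinC) in_set0.
- move=> v; rewrite negb_or => /andP[HinC HJ].
  rewrite (negbTE HinC) (negbTE HJ) /=.
  set Ep' := [set e0 in Ep s v | _].
  case: (boolP (\sum_(e in Ep') deal s e <= beta / alpha * w v)) => Hsm.
    apply: (@le_trans _ _ (\sum_(e in Ep') alpha * deal s e)).
      apply: ler_sum => e _.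
      have H1 : deal s e <= alpha * deal s e by rewrite ler_peMl // ltW.
      by case: ifP => _ //; case: ifP.
    rewrite -mulr_sumr.
    have -> : beta * w v = alpha * (beta / alpha * w v).
      by field; rewrite gt_eqF.
    by rewrite ler_wpM2l // ltW.
  case: (boolP (Ep' == set0)) => [/eqP -> | HE]; first by rewrite big_set0 mulr_ge0.
  have Hterm : ~~ term s v.
    apply/negP => Hterm; move: HE; rewrite /Ep' (Ht _ Hterm HinC).
    apply/negP; rewrite negbK; apply/eqP/setP => e; by rewrite !inE.
  apply: le_trans (Hs v HinC).
  apply: (@le_trans _ _ (\sum_(e in Ep') deal s e)).
    apply: ler_sum => e eE; case: ifP => // _; rewrite ifT //.
    apply/existsP; exists v.
    rewrite (negbTE Hterm) /= in HJ.
    rewrite (negbTE HinC) (negbTE Hterm) (negbTE HJ) /= -/Ep'.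
    by rewrite (negbTE HE) andbF Hsm eE.
  apply: sum_sub => [|e _]; last exact: Hd.
  by apply/subsetP => e; rewrite inE => /andP[].
Qed.

Theorem mainTheorem1 (R : realFieldType) (V E : finType)
  (inc : V -> E -> bool) (w : V -> R) (f : nat) (eps alpha : R)
  (Hedge_ne : forall e : E, exists v : V, inc v e)
  (Hrank : forall e : E, (#|[set v | inc v e]| <= f)%N)
  (HDelta : (3 <= \max_(v : V) #|Eof inc v|)%N)
  (Hw : forall v : V, 0 <= w v)
  (Heps : 0 < eps <= 1)
  (Halpha : 1 < alpha) :
  let beta := eps / (f%:R + eps) in
  forall (i : nat) (v : V),
    ~~ inC (state_at inc w beta alpha i) v ->
    \sum_(e in Ep (state_at inc w beta alpha i) v)
        deal (state_at inc w beta alpha i) e <= beta * w v.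
Proof.
move=> beta.
have Hb : 0 <= beta.
  case/andP: Heps => He _.
  by rewrite /beta divr_ge0 // ?addr_ge0 // ltW.
suff H : forall i, let s := state_at inc w beta alpha i in
  [/\ (forall e, 0 <= deal s e),
      (forall v, term s v -> ~~ inC s v -> Ep s v = set0) &
      (forall v, ~~ inC s v -> \sum_(e in Ep s v) deal s e <= beta * w v)].
  move=> i; case: (H i) => _ _ Hs; exact: Hs.
elim=> [|i IH].
  rewrite /state_at /= /init_state /=; split => //.
    move=> e; rewrite /deal0 mulr_ge0 // seqmin_ge0 //.
    apply/allP => x /mapP [u _ ->]; by rewrite divr_ge0.
  move=> v _.
  apply: (@le_trans _ _ (\sum_(e in Eof inc v) (beta * (w v / (deg inc v)%:R)))).
    apply: ler_sum => e; rewrite inE => He.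
    rewrite /deal0 ler_wpM2l // seqmin_le //.
    apply: (map_f (fun u => w u / (deg inc u)%:R)).
    by rewrite mem_filter He mem_enum.
  rewrite sumr_const -/(deg inc v).
  case: (posnP (deg inc v)) => [-> |Hpos]; first by rewrite mulr0n mulr_ge0.
  have Hn : (deg inc v)%:R != 0 :> R by rewrite pnatr_eq0 -lt0n.
  rewrite (_ : beta * (w v / (deg inc v)%:R) *+ deg inc v = beta * w v) //.
  by rewrite -[LHS]mulr_natr; field.
rewrite /state_at iterS; case: IH => Hd Ht Hs.
apply: step_inv => //.
Qed.
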